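(* Let $n\ge1$, let $G^\star=([n],E^\star)$ be a directed graph (directed cycles allowed), and let $S_1=\operatorname{argmin}_{\mathcal S}|E^{(1)}|$, $S_2=\operatorname{argmin}_{S_1}|E^{(2)}|$, $S_3=\operatorname{argmin}_{S_2}|E^{(3)}|$, $S_4=\operatorname{argmin}_{(\mathcal P,\pi)\in S_3}|E^{(4)}_{(\mathcal P,\pi)}|$. Then (i) the partially ordered partition associated with $G^\star$ belongs to $S_4$, and (ii) for every $(\mathcal P,\pi)\in S_4$, $((a,b_1,c),(a,b_2,c))\in E^{(4)}_{(\mathcal P,\pi)}$ if and only if $(a,b_1,c)$ and $(a,b_2,c)$ are unshielded imperfect non-conductors in $G^\star$ and $b_1$ is an ancestor of $b_2$ in $G^\star$.
   Context: $[n]=\{1,\dots,n\}$. The observed distribution is Markov and faithful to $G^\star$; for distinct $a,b$ and $Z\subseteq[n]\setminus\{a,b\}$, $a\perp\!\!\!\perp b\mid Z$ means $a$ and $b$ are $d$-separated given $Z$ in $G^\star$, and $a\not\perp\!\!\!\perp b\mid Z$ is its negation. In a directed graph, $a$ is an ancestor of $b$ (and $b$ a descendant of $a$) if $a=b$ or there is a directed path from $a$ to $b$. Distinct $a,b$ are $p$-adjacent in a directed graph $G$ if there is an edge between them, or they have a common child which is an ancestor of $a$ or of $b$. A triple $(a,b,c)$ such that $a,c$ are not $p$-adjacent while $a,b$ and $c,b$ are $p$-adjacent is an unshielded conductor if $b$ is an ancestor of $a$ or of $c$, and an unshielded non-conductor otherwise; an unshielded non-conductor $(a,b,c)$ is perfect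 if $b$ is a descendant of a common child of $a$ and $c$, and imperfect otherwise. $\mathcal S$ is the set of pairs $(\mathcal P,\pi)$ with $\mathcal P$ a partition of $[n]$ and $\pi$ a partial order on $\mathcal P$; $C_1\le_\pi C_2$ iff $(C_1,C_2)\in\pi$; $C_{i,\mathcal P}$ is the block containing $i$; $C\le_\pi\max\{C_1,\dots,C_t\}$ means $C\le_\pi C_i$ for some $i$. The strongly connected components of a directed graph $G$ are the classes of $i\sim j$ iff $i=j$ or there are directed paths $i\to j$ and $j\to i$; on them $C_1\le_G C_2$ iff $C_1=C_2$ or there is a directed path from a vertex of $C_1$ to a vertex of $C_2$. The partially ordered partition associated with $G$ is (its set of strongly connected components, $\le_G$). For $(\mathcal P,\pi)\in\mathcal S$ (all sets below indexed by $(\mathcal P,\pi)$): $E^{(1)}=\{(a,b): a\ne b,\ a\not\perp\!\!\!\perp b\mid\bigcup\{C\in\mathcal P: C\le_\pi\max\{C_{a,\mathcal P},C_{b,\mathcal P}\}\}\setminus\{a,b\}\}$; $E^{(2)}$ is the set of $(a,b,c)$ distinct with $(a,b),(c,b)\in E^{(1)}$, $(a,c)\notin E^{(1)}$, $C_{b,\mathcal P}\le_\pi\max\{C_{a,\mathcal P},C_{c,\mathcal P}\}$; $E^{(3)}$ is the set of $(a,b,c)$ distinct with $(a,b),(c,b)\in E^{(1)}$, $(a,c)\notin E^{(1)}$, and $a\not\perp\!\!\!\perp c\mid\bigcup\{C\in\mathcal P: C\le_\pi\max\{C_{a,\mathcal P},C_{b,\mathcal P},C_{c,\mathcal P}\}\}\setminus\{a,c\}$;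 $E^{(4)}$ is the set of pairs $((a,b_1,c),(a,b_2,c))\in[n]^3\times[n]^3$ with $a,b_1,c$ distinct, $a,b_2,c$ distinct, $(a,b_1),(c,b_1),(a,b_2),(c,b_2)\in E^{(1)}$, $(a,c)\notin E^{(1)}$, $(a,b_1,c),(a,b_2,c)\notin E^{(2)}$, $(a,b_1,c),(a,b_2,c)\notin E^{(3)}$, and $C_{b_1,\mathcal P}\le_\pi C_{b_2,\mathcal P}$. *)

(* Defs.v *)
From mathcomp Require Import all_boot all_order.
From mathcomp Require Import boolp.

Set Implicit Arguments.
Unset Strict Implicit.
Unset Printing Implicit Defensive.

Section Defs.
Variable T : finType.

(* A directed graph on T is an edge relation G : rel T (G u v means u -> v).
   Ancestor: a is an ancestor of b iff connect G a b
   (a = b or there is a directed path from a to b). *)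

(* A path between a and b: a sequence of steps (d, v); a step goes from the
   previous vertex u to v through the edge u -> v if d = true, and through
   the edge v -> u if d = false.
   It is d-connecting given Z if every collider (both adjacent edges point
   into it) is an ancestor of a vertex of Z, and every non-collider is not
   in Z. *)
Definition dconn_path (G : rel T) (Z : {set T}) (a b : T)
    (s : seq (bool * T)) : Prop :=
  let vs := a :: map snd s in
  [/\ 0 < size s, last a (map snd s) = b, uniq vs,
   (forall i, i < size s ->
      if (nth (true, a) s i).1 then G (nth a vs i) (nth a vs i.+1)
      else G (nth a vs i.+1) (nth a vs i)) &
   (forall i, 0 < i < size s ->
      if (nth (true, a) s i.-1).1 && ~~ (nth (true, a) s i).1
      then exists2 z, z \in Z & connect G (nth a vs i) z
      else nth a vs i \notin Z)].

Definition dsep (G : rel T) (a b : T) (Z : {set T}) : Prop :=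
  ~ exists s, dconn_path G Z a b s.

Definition padj (G : rel T) (a b : T) : Prop :=
  a != b /\
  (G a b \/ G b a \/
   exists c, [/\ G a c, G b c & (connect G c a || connect G c b)]).

Definition unshielded (G : rel T) (a b c : T) : Prop :=
  [/\ uniq [:: a; b; c], ~ padj G a c, padj G a b & padj G c b].

Definition unshielded_conductor (G : rel T) (a b c : T) : Prop :=
  unshielded G a b c /\ (connect G b a || connect G b c).

Definition unshielded_nonconductor (G : rel T) (a b c : T) : Prop :=
  unshielded G a b c /\ ~~ (connect G b a || connect G b c).

Definition perfect_nc (G : rel T) (a b c : T) : Prop :=
  unshielded_nonconductor G a b c /\
  exists d, [/\ G a d, G c d & connect G d b].

Definition imperfect_nc (G : rel T) (a b c : T) : Prop :=
  unshielded_nonconductor G a b c /\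
  ~ exists d, [/\ G a d, G c d & connect G d b].

(* Partially ordered partitions: P a partition of T, pi a partial order on P
   given as a set of pairs (C1, C2) meaning C1 <=_pi C2. *)
Definition is_pop (P : {set {set T}}) (pi : {set {set T} * {set T}}) : Prop :=
  [/\ partition P [set: T],
      pi \subset setX P P,
      (forall C, C \in P -> (C, C) \in pi),
      (forall C1 C2, (C1, C2) \in pi -> (C2, C1) \in pi -> C1 = C2) &
      (forall C1 C2 C3, (C1, C2) \in pi -> (C2, C3) \in pi -> (C1, C3) \in pi)].

Section Sets.
Variables (G : rel T) (P : {set {set T}}) (pi : {set {set T} * {set T}}).

Local Notation blk x := (pblock P x).
Local Notation lep C1 C2 := ((C1, C2) \in pi).

Definition cond2 (a b : T) : {set T} :=
  (\bigcup_(C in P | lep C (blk a) || lep C (blk b)) C) :\: [set a; b].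

Definition cond3 (a b c : T) : {set T} :=
  (\bigcup_(C in P | [|| lep C (blk a), lep C (blk b) | lep C (blk c)]) C)
    :\: [set a; c].

Definition E1 : {set T * T} :=
  [set ab | (ab.1 != ab.2) && `[< ~ dsep G ab.1 ab.2 (cond2 ab.1 ab.2) >]].

Definition E2 : {set T * T * T} :=
  [set t | let: (a, b, c) := t in
     [&& uniq [:: a; b; c], (a, b) \in E1, (c, b) \in E1, (a, c) \notin E1
       & lep (blk b) (blk a) || lep (blk b) (blk c)]].

Definition E3 : {set T * T * T} :=
  [set t | let: (a, b, c) := t in
     [&& uniq [:: a; b; c], (a, b) \in E1, (c, b) \in E1, (a, c) \notin E1
       & `[< ~ dsep G a c (cond3 a b c) >]]].

Definition E4 : {set (T * T * T) * (T * T * T)} :=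
  [set x | let: ((a, b1, c), (a', b2, c')) := x in
     [&& a' == a, c' == c, uniq [:: a; b1; c], uniq [:: a; b2; c],
         (a, b1) \in E1, (c, b1) \in E1, (a, b2) \in E1, (c, b2) \in E1,
         (a, c) \notin E1,
         (a, b1, c) \notin E2, (a, b2, c) \notin E2,
         (a, b1, c) \notin E3, (a, b2, c) \notin E3
       & lep (blk b1) (blk b2)]].
End Sets.

Definition S1 (G : rel T) P pi : Prop :=
  is_pop P pi /\
  forall P' pi', is_pop P' pi' -> #|E1 G P pi| <= #|E1 G P' pi'|.
Definition S2 (G : rel T) P pi : Prop :=
  S1 G P pi /\
  forall P' pi', S1 G P' pi' -> #|E2 G P pi| <= #|E2 G P' pi'|.
Definition S3 (G : rel T) P pi : Prop :=
  S2 G P pi /\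
  forall P' pi', S2 G P' pi' -> #|E3 G P pi| <= #|E3 G P' pi'|.
Definition S4 (G : rel T) P pi : Prop :=
  S3 G P pi /\
  forall P' pi', S3 G P' pi' -> #|E4 G P pi| <= #|E4 G P' pi'|.

Definition scc_partition (G : rel T) : {set {set T}} :=
  [set [set j | connect G i j && connect G j i] | i : T].
Definition scc_order (G : rel T) : {set {set T} * {set T}} :=
  [set CC in setX (scc_partition G) (scc_partition G) |
     (CC.1 == CC.2) || [exists i in CC.1, exists j in CC.2, connect G i j]].

End Defs.

(* Main.v *)
Require Import Defs.
From mathcomp Require Import all_boot all_order.
From mathcomp Require Import boolp.
From mathcomp Require Import zify.

Set Implicit Arguments.
Unset Strict Implicit.
Unset Printing Implicit Defensive.



Section Walks.
Variable T : finType.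
Variable G : rel T.
Variable Z : {set T}.

Definition anz (u : T) : bool := [exists z in Z, connect G u z].

Definition junc (pd : option bool) (d : bool) (u : T) : bool :=
  if pd is Some p then (if p && ~~ d then anz u else u \notin Z) else true.

Fixpoint wk (u : T) (pd : option bool) (s : seq (bool * T)) : Prop :=
  if s is (d, v) :: s' then
    [/\ (if d then G u v else G v u), junc pd d u & wk v (Some d) s']
  else True.

Definition lastdir (pd : option bool) (s : seq (bool * T)) :=
  last pd (map (fun st => Some st.1) s).

Lemma wk_cat u pd s1 s2 :
  wk u pd (s1 ++ s2) <->
  wk u pd s1 /\ wk (last u (map snd s1)) (lastdir pd s1) s2.
Proof.
elim: s1 u pd => [|[d v] s1 IH] u pd /=; first by split=> // [[]].
rewrite /lastdir /= -/(lastdir _ _).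
split.
  by case=> e j /IH [w1 w2].
by case=> [[e j w1] w2]; split=> //; apply/IH.
Qed.

Lemma anzP u : reflect (exists2 z, z \in Z & connect G u z) (anz u).
Proof.
apply: (iffP existsP).
  by case=> z /andP[zZ c]; exists z.
by case=> z zZ c; exists z; rewrite zZ.
Qed.

Lemma anz_edge u v : G u v -> anz v -> anz u.
Proof.
move=> e /anzP[z zZ c]; apply/anzP; exists z => //.
exact: connect_trans (connect1 e) c.
Qed.

Lemma anz_conn u v : connect G u v -> anz v -> anz u.
Proof.
move=> e /anzP[z zZ c]; apply/anzP; exists z => //.
exact: connect_trans e c.
Qed.

Lemma notanz_notin u : ~~ anz u -> u \notin Z.
Proof. by apply: contra => uZ; apply/anzP; exists u. Qed.

Lemma wk_up u pd s : wk u None s -> (forall d, junc pd d u) -> wk u pd s.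
Proof. by case: s => [|[d v] s] //= [e _ w] J; split. Qed.

Lemma lastdir_all pd s b :
  all (fun st => st.1 == b) s -> lastdir pd s = if s is [::] then pd else Some b.
Proof.
elim: s pd => [|[d v] s IH] pd //= /andP[/eqP -> A].
rewrite /lastdir /= -/(lastdir _ _) IH //.
by case: s {IH A}.
Qed.

Lemma fwd_all s u pd w :
  wk u pd ((true, w) :: s) -> ~~ anz u -> all (fun st => st.1) ((true, w) :: s).
Proof.
elim: s u pd w => [|[d' w'] s IH] u pd w /=; first by [].
case=> e _ [e' j' w''] nu.
have nw : ~~ anz w by apply: contra nu; apply: anz_edge.
case: d' e' j' w'' => e' j' w''.
  have := IH w (Some true) w' (And3 e' j' w'') nw.
  by rewrite /=.
by move: j'; rewrite /junc /= (negbTE nw).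
Qed.

Lemma fwd_conn s u pd :
  all (fun st => st.1) s -> wk u pd s -> connect G u (last u (map snd s)).
Proof.
elim: s u pd => [|[d v] s IH] u pd /=; first by rewrite connect0.
case/andP=> dT A [e _ w]; move: e; rewrite dT => e.
exact: connect_trans (connect1 e) (IH _ _ A w).
Qed.

Lemma fchain u v pd :
  connect G u v -> ~~ anz u ->
  exists s, [/\ last u (map snd s) = v, wk u pd s & all (fun st => st.1 == true) s].
Proof.
case/connectP=> p; elim: p u pd => [|w p IH] u pd /=.
  by move=> _ -> _; exists [::].
case/andP=> e pth vE nu.
have nw : ~~ anz w by apply: contra nu; apply: anz_edge.
have [s [l ws A]] := IH w (Some true) pth vE nw.
exists ((true, w) :: s); split => //=.
split=> //.
by case: pd => //= p'; rewrite andbF; apply: notanz_notin.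
Qed.

Lemma bchain u v :
  connect G v u -> ~~ anz v ->
  exists s, [/\ last u (map snd s) = v, wk u None s & all (fun st => st.1 == false) s].
Proof.
case/connectP=> p; elim: p v => [|w p IH] v /=.
  by move=> _ -> _; exists [::].
case/andP=> e pth uE nv.
have nw : ~~ anz w by apply: contra nv; apply: anz_edge.
have [s [l ws A]] := IH w pth uE nw.
exists (rcons s (false, v)); split.
- by rewrite map_rcons last_rcons.
- rewrite -cats1; apply/wk_cat; split => //; rewrite l /=; split => //.
  rewrite (lastdir_all _ A); case: s {l ws A} => //=.
  by rewrite notanz_notin.
- by rewrite all_rcons A andbT.
Qed.

Lemma padj_walk x y :
  padj G x y ->
  exists s, [/\ 0 < size s, last x (map snd s) = y & wk x None s].
Proof.
case=> _ [e|[e|[c [exc eyc cc]]]].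
- by exists [:: (true, y)].
- by exists [:: (false, y)].
case ac: (anz c).
  by exists [:: (true, c); (false, y)]; split => //=; rewrite /junc /= ac.
case/orP: cc => cc.
- have [s [l ws A]] := bchain cc (negbT ac).
  exists (rcons s (false, y)); split.
  + by rewrite size_rcons.
  + by rewrite map_rcons last_rcons.
  + rewrite -cats1; apply/wk_cat; split => //; rewrite l /=; split => //.
    rewrite (lastdir_all _ A); case: s {l ws A} => //=.
    by rewrite notanz_notin // ac.
- have [s [l ws A]] := fchain (Some true) cc (negbT ac).
  by exists ((true, c) :: s); split.
Qed.

End Walks.



Section Bridge.
Variable T : finType.
Variable G : rel T.
Variable Z : {set T}.

Definition vtx (u : T) (s : seq (bool * T)) i := nth u (u :: map snd s) i.
Definition dir (u : T) (s : seq (bool * T)) i := (nth (true, u) s i).1.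

Definition EC u s := forall i, i < size s ->
  if dir u s i then G (vtx u s i) (vtx u s i.+1) else G (vtx u s i.+1) (vtx u s i).
Definition JC u s := forall i, 0 < i < size s ->
  if dir u s i.-1 && ~~ dir u s i then exists2 z, z \in Z & connect G (vtx u s i) z
  else vtx u s i \notin Z.

Lemma vtx0 u s : vtx u s 0 = u. Proof. by []. Qed.
Lemma vtxS u d v s i : i <= size s -> vtx u ((d, v) :: s) i.+1 = vtx v s i.
Proof.
move=> h; rewrite /vtx /=; apply: set_nth_default; by rewrite /= size_map ltnS.
Qed.
Lemma dir0 u d v s : dir u ((d, v) :: s) 0 = d. Proof. by []. Qed.
Lemma dirS u d v s i : i < size s -> dir u ((d, v) :: s) i.+1 = dir v s i.
Proof. by move=> h; rewrite /dir /= (set_nth_default (true, v)). Qed.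

Lemma EC_cons u d v s : EC u ((d, v) :: s) <-> (if d then G u v else G v u) /\ EC v s.
Proof.
split.
- move=> H; split; first by have := H 0 isT; rewrite dir0 vtx0 vtxS //.
  move=> i lt; have := H i.+1 lt.
  have l1 := ltnW lt.
  by rewrite dirS // !vtxS.
- case=> e H [|i] lt; first by rewrite dir0 vtx0 vtxS //.
  have lt' : i < size s := lt; have l1 := ltnW lt'.
  by rewrite dirS // !vtxS //; apply: H.
Qed.

Lemma JC_cons u d v s : JC u ((d, v) :: s) <->
  (if s is (d', _) :: _ then junc G Z (Some d) d' v else true) /\ JC v s.
Proof.
split.
- move=> H; split.
    case: s H => [|[d' v'] s] // H.
    have := H 1 isT; rewrite /= dir0 dirS // dir0 vtxS // vtx0 /junc.
    by case: ifP => _ // [z zZ c]; apply/anzP; exists z.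
  move=> [|i] // /andP[_ lt]; have := H i.+2 lt.
  have l1 := ltnW lt.
  by rewrite /= dirS // dirS // vtxS.
- case=> h H [|[|i]] // /andP[_ lt].
    case: s h H lt => [|[d' v'] s] // h H _.
    rewrite /= dir0 dirS // dir0 vtxS // vtx0; move: h; rewrite /junc.
    by case: ifP => _ // /anzP.
  have lt' : i.+1 < size s := lt; have l1 := ltnW lt'.
  rewrite /= dirS // dirS // vtxS //.
  by apply: H.
Qed.

Lemma wk_idx u pd s :
  wk G Z u pd s <-> [/\ (if s is (d, _) :: _ then junc G Z pd d u else true), EC u s & JC u s].
Proof.
elim: s u pd => [|[d v] s IH] u pd /=.
  by split=> // _; split=> // i; rewrite ltn0 // andbF.
split.
- case=> e j /IH [h ec jc]; split => //.
    by apply/EC_cons.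
  by apply/JC_cons.
- case=> j /EC_cons [e ec] /JC_cons [h jc]; split => //.
  by apply/IH.
Qed.

Lemma dconn_wk a b s :
  dconn_path G Z a b s <->
  [/\ 0 < size s, last a (map snd s) = b, uniq (a :: map snd s) & wk G Z a None s].
Proof.
split.
- case=> h1 h2 h3 h4 h5; split => //; apply/wk_idx; split => //.
  by case: s {h1 h2 h3 h4 h5} => [|[]].
- case=> h1 h2 h3 /wk_idx [_ h4 h5]; split => //.
Qed.

End Bridge.



Section W2P.
Variable T : finType.
Variable G : rel T.
Variable Z : {set T}.

Lemma last_take (l : seq T) a i : i <= size l -> last a (take i l) = nth a (a :: l) i.
Proof.
elim: l a i => [|x l IH] a [|i] //=.
rewrite ltnS => h; rewrite IH //; apply: set_nth_default; by rewrite /= ltnS.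
Qed.

Lemma lastdir_some pd (x : bool * T) s : exists p, lastdir pd (x :: s) = Some p.
Proof.
elim: s x => [|y s IH] x; first by exists x.1.
have [p hp] := IH y; exists p; by rewrite /lastdir /= -/(lastdir _ _) -hp.
Qed.

Lemma w2p a b : a != b -> forall s, 0 < size s -> last a (map snd s) = b ->
  wk G Z a None s -> exists s', dconn_path G Z a b s'.
Proof.
move=> ab s; have [m lt] := ubnP (size s); elim: m s lt => // m IH s lt s0 ls ws.
case U: (uniq (a :: map snd s)).
  by exists s; apply/dconn_wk.
move/negbT/(uniqPn a): U => [i [j [ij jlt E]]].
have jle : j <= size s by move: jlt; rewrite /= size_map ltnS.
have ile : i <= size s by apply: leq_trans (ltnW ij) jle.
set s1 := take i s; set r := drop i s; set s2 := take (j - i) r; set s3 := drop (j - i) r.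
have es : s = s1 ++ s2 ++ s3 by rewrite /s2 /s3 cat_take_drop /s1 /r cat_take_drop.
set v := nth a (a :: map snd s) i.
have l1 : last a (map snd s1) = v by rewrite /s1 map_take last_take // size_map.
have l12 : last a (map snd (s1 ++ s2)) = v.
  rewrite /v E /s1 /s2 /r -takeD subnKC ?(ltnW ij) //.
  by rewrite map_take last_take // size_map.
have l2 : last v (map snd s2) = v by rewrite -{1}l1 -last_cat -map_cat.
have s2n : 0 < size s2.
  rewrite /s2 size_take /r size_drop; case: ifP => _; lia.
move: ws; rewrite es => /wk_cat [w1]; rewrite l1 => w23.
move/wk_cat: (w23) => [w2]; rewrite l2 => w3.
have lb : last v (map snd s3) = b.
  by rewrite -ls es !map_cat !last_cat l1 l2.
have w13 : wk G Z v (lastdir None s1) s3.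
  move: s2n w23 w2 w3; case E2: (s2) => [|[d2 x2] s2'] // _ w23 w2 w3.
  have [p2 hp2] := lastdir_some (lastdir None s1) (d2, x2) s2'.
  move: w3; rewrite hp2; case E3: (s3) => [|[d w] s3'] // [e j3 ws3].
  split=> //; move: w2 w23 hp2; case: (lastdir None s1) => [p1|]; last by move=> *; rewrite /junc.
  move=> [_ j2 _] w23 hp2.
  case C: (p1 && ~~ d).
    rewrite /junc C; case A: (anz G Z v) => //; have nv := negbT A.
    move: j2 w23; case: (d2) => j2 w23.
      have := fwd_all w23 nv; rewrite -[X in all _ (_ :: X)]/(s2' ++ s3) E3 /= all_cat /= => /andP[_ /andP[dd _]].
      by move: C; rewrite dd andbF.
    by move: C j2 => /andP[p1T _]; rewrite /junc p1T /= A.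
  rewrite /junc C; apply/negP => vZ.
  move: j2 j3; rewrite /junc.
  case: (p1 && ~~ d2) / boolP => [/andP[p1T _]|_]; last by rewrite vZ.
  case: (p2 && ~~ d) / boolP => [/andP[_ dF]|_]; last by rewrite vZ.
  by move: C; rewrite p1T dF.
apply: (IH (s1 ++ s3)).
- move: lt s2n; rewrite es !size_cat; lia.
- case E13: (s1 ++ s3) => [|x t] //.
  have : last a (map snd (s1 ++ s3)) = b by rewrite map_cat last_cat l1.
  by rewrite E13 /= => abe; move: ab; rewrite abe eqxx.
- by rewrite map_cat last_cat l1.
- by apply/wk_cat; rewrite l1.
Qed.

End W2P.



Section Conseq.
Variable T : finType.
Variable G : rel T.

Lemma padj_sym x y : padj G x y -> padj G y x.
Proof.
case=> xy [e|[e|[c [e1 e2 cc]]]]; split; rewrite 1?eq_sym //; auto.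
by right; right; exists c; split => //; rewrite orbC.
Qed.

Lemma padj_neq x y : padj G x y -> x != y.
Proof. by case. Qed.

Variable Z : {set T}.

Lemma walk_dconn x y s : x != y -> 0 < size s -> last x (map snd s) = y ->
  wk G Z x None s -> ~ dsep G x y Z.
Proof. by move=> xy s0 l w; have [s' h] := w2p xy s0 l w; move=> D; apply: D; exists s'. Qed.

Lemma padj_dconn x y : padj G x y -> ~ dsep G x y Z.
Proof.
move=> p; have [s [s0 l w]] := padj_walk Z p.
exact: walk_dconn (padj_neq p) s0 l w.
Qed.

Lemma junction_dconn x b z : x != z -> padj G x b -> padj G b z ->
  anz G Z b -> b \notin Z -> ~ dsep G x z Z.
Proof.
move=> xz p1 p2 ab nb.
have [s1 [s10 l1 w1]] := padj_walk Z p1.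
have [s2 [s20 l2 w2]] := padj_walk Z p2.
apply: (@walk_dconn x z (s1 ++ s2)) => //.
- by rewrite size_cat; apply: leq_trans s10 (leq_addr _ _).
- by rewrite map_cat last_cat l1.
- apply/wk_cat; split => //; rewrite l1; apply: wk_up => // d.
  by rewrite /junc; case: (lastdir _ _) => // p; case: ifP.
Qed.

Lemma conductor_dconn x b z : x != z -> x != b -> connect G b x ->
  ~~ anz G Z b -> padj G b z -> ~ dsep G x z Z.
Proof.
move=> xz xb c nb p2.
have [s1 [l1 w1 A]] := bchain c nb.
have [s2 [s20 l2 w2]] := padj_walk Z p2.
have s1n : s1 != [::] by apply/eqP => e; move: l1 xb; rewrite e /= => ->; rewrite eqxx.
apply: (@walk_dconn x z (s1 ++ s2)) => //.
- by rewrite size_cat; apply: leq_trans s20 (leq_addl _ _).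
- by rewrite map_cat last_cat l1.
- apply/wk_cat; split => //; rewrite l1; apply: wk_up => // d.
  rewrite (lastdir_all _ A); move: s1n; case: (s1) => // _ _ _.
  by rewrite /junc /= (notanz_notin nb).
Qed.

Lemma sepW (W : {set T}) x y s :
  (forall u w, connect G u w -> w \in W -> u \in W) -> x \in W -> y \in W ->
  dconn_path G (W :\: [set x; y]) x y s ->
  G x y \/ G y x \/ exists d, [/\ G x d, G y d & d \in W].
Proof.
move=> cl xW yW /dconn_wk [s0 l u w].
set Z' := W :\: [set x; y] in w.
have anzW v : anz G Z' v -> v \in W.
  by case/anzP => z; rewrite inE => /andP[_ zW] c; apply: cl c zW.
case: s s0 l u w => [|[d1 v1] s] // _ /= l u [e1 _ w].
case: s l u w => [|[d2 v2] s] /= l u.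
  by move=> _; rewrite -l; case: d1 e1; auto.
case=> e2 j2 w.
move: u => /= /andP[xn /andP[v1n /andP[v2n _]]].
have yin : y \in v2 :: map snd s by rewrite -l mem_last.
have xv1 : x != v1 by apply/eqP => E; move: xn; rewrite E mem_head.
have v1y : v1 != y by apply/eqP => E; move: v1n; rewrite E yin.
have inZ v : v \in W -> v != x -> v != y -> v \in Z'.
  by move=> vW vx vy; rewrite /Z' !inE negb_or vx vy vW.
have v1W : v1 \in W.
  move: e1 j2 w; case: (d1) => e1 j2 w; last by apply: cl (connect1 e1) xW.
  case A: (anz G Z' v1); first by apply: anzW.
  move: e2 j2 w; case: (d2) => e2 j2 w; last by move: j2; rewrite /junc /= A.
  have W2 : wk G Z' v1 (Some true) ((true, v2) :: s) by split.
  have := fwd_conn (fwd_all W2 (negbT A)) W2; rewrite /= l => c.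
  exact: cl c yW.
have v1Z : v1 \in Z' by apply: inZ; rewrite // eq_sym.
move: j2; rewrite /junc; case H: (d1 && ~~ d2); last by rewrite v1Z.
move=> _; move: H e1 e2 w => /andP[-> /negbTE ->] e1 e2 w.
have v2W : v2 \in W by apply: cl (connect1 e2) v1W.
clear v1n; case: s l yin v2n w xn => [|[d3 v3] s] /= l yin v2n w xn.
  by right; right; exists v1; split => //; rewrite -l.
case: w => _ j3 _; move: j3; rewrite /junc /= => /negP nZ; exfalso; apply: nZ.
apply: inZ => //.
  by apply/eqP => E; move: xn; rewrite E !inE eqxx orbT.
by apply/eqP => E; move: v2n; rewrite E -l mem_last.
Qed.

End Conseq.



Section Pop.
Variable T : finType.
Variable G : rel T.

Lemma mem_blocks (P : {set {set T}}) (f : {set T} -> bool) u :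
  partition P [set: T] -> (u \in \bigcup_(C in P | f C) C) = f (pblock P u).
Proof.
case/and3P => /eqP cov triv _.
have uc : u \in cover P by rewrite cov inE.
apply/bigcupP/idP.
  by case=> C /andP[CP fC] uC; rewrite (def_pblock triv CP uC).
by move=> fu; exists (pblock P u); rewrite ?pblock_mem ?fu ?mem_pblock.
Qed.

Definition lep (P : {set {set T}}) (pi : {set {set T} * {set T}}) u v :=
  (pblock P u, pblock P v) \in pi.

Lemma mem_cond2 P pi a b u : partition P [set: T] ->
  (u \in cond2 P pi a b) = (u \notin [set a; b]) && (lep P pi u a || lep P pi u b).
Proof.
move=> pP; rewrite /cond2 in_setD.
by rewrite (mem_blocks (fun C => ((C, pblock P a) \in pi) || ((C, pblock P b) \in pi))).
Qed.

Lemma mem_cond3 P pi a b c u : partition P [set: T] ->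
  (u \in cond3 P pi a b c) =
  (u \notin [set a; c]) && [|| lep P pi u a, lep P pi u b | lep P pi u c].
Proof.
move=> pP; rewrite /cond3 in_setD.
by rewrite (mem_blocks (fun C => [|| (C, pblock P a) \in pi, (C, pblock P b) \in pi
   | (C, pblock P c) \in pi])).
Qed.

Definition sccs x := [set j | connect G x j && connect G j x].

Lemma sccs_self x : x \in sccs x.
Proof. by rewrite inE connect0. Qed.

Lemma sccs_eq x y : y \in sccs x -> sccs y = sccs x.
Proof.
rewrite inE => /andP[xy yx]; apply/setP => z; rewrite !inE.
apply/andP/andP => [[yz zy]|[xz zx]]; split.
- exact: connect_trans xy yz.
- exact: connect_trans zy yx.
- exact: connect_trans yx xz.
- exact: connect_trans zx xy.
Qed.

Local Notation sP := (scc_partition G).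
Local Notation sO := (scc_order G).

Lemma sP_mem C : (C \in sP) = [exists i, C == sccs i].
Proof.
apply/imsetP/existsP => [[i _ ->]|[i /eqP ->]]; first by exists i.
by exists i.
Qed.

Lemma sccs_in x : sccs x \in sP.
Proof. by rewrite sP_mem; apply/existsP; exists x. Qed.

Lemma sP_partition : partition sP [set: T].
Proof.
apply/and3P; split.
- apply/eqP/setP => x; rewrite inE; apply/bigcupP.
  by exists (sccs x); [apply: sccs_in | apply: sccs_self].
- apply/trivIsetP => A B; rewrite !sP_mem => /existsP[i /eqP ->] /existsP[j /eqP ->] ne.
  apply/pred0P => z /=; apply/negP => /andP[zi zj].
  by move: ne; rewrite -(sccs_eq zi) -(sccs_eq zj) eqxx.
- by apply/negP; rewrite sP_mem => /existsP[i /eqP E]; move: (sccs_self i); rewrite -E inE.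
Qed.

Lemma pblock_sP x : pblock sP x = sccs x.
Proof.
by apply: def_pblock; [case/and3P: sP_partition | apply: sccs_in | apply: sccs_self].
Qed.

Lemma le_scc u v : ((sccs u, sccs v) \in sO) = connect G u v.
Proof.
rewrite /scc_order inE /= in_setX !sccs_in /=.
apply/orP/idP.
- case=> [/eqP E|/existsP[i /andP[iu /existsP[j /andP[jv c]]]]].
    by have := sccs_self v; rewrite -E inE => /andP[].
  move: iu jv; rewrite !inE => /andP[ui _] /andP[_ jv].
  exact: connect_trans ui (connect_trans c jv).
- move=> c; right; apply/existsP; exists u; rewrite sccs_self; apply/existsP.
  by exists v; rewrite sccs_self.
Qed.

Lemma lep_scc u v : lep sP sO u v = connect G u v.
Proof. by rewrite /lep !pblock_sP le_scc. Qed.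

Lemma popS : is_pop sP sO.
Proof.
split.
- exact: sP_partition.
- by apply/subsetP => CC; rewrite inE => /andP[].
- move=> C; rewrite sP_mem => /existsP[i /eqP ->]; by rewrite le_scc connect0.
- move=> C1 C2; have : (C1, C2) \in sO -> C1 \in sP /\ C2 \in sP.
    by rewrite inE /= in_setX => /andP[/andP[]].
  move=> h /[dup] /h [] ; rewrite !sP_mem => /existsP[i /eqP ->] /existsP[j /eqP ->].
  rewrite !le_scc => ij ji; apply: sccs_eq; by rewrite inE ij ji.
- move=> C1 C2 C3; have h : forall A B, (A, B) \in sO -> A \in sP /\ B \in sP.
    by move=> A B; rewrite inE /= in_setX => /andP[/andP[]].
  move=> h12 h23; have [C1P C2P] := h _ _ h12; have [_ C3P] := h _ _ h23.
  move: C1P C2P C3P h12 h23; rewrite !sP_mem.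
  move=> /existsP[i /eqP ->] /existsP[j /eqP ->] /existsP[k /eqP ->].
  rewrite !le_scc; exact: connect_trans.
Qed.

Lemma mem_cond2_scc a b u :
  (u \in cond2 sP sO a b) = (u \notin [set a; b]) && (connect G u a || connect G u b).
Proof. by rewrite mem_cond2 ?sP_partition // !lep_scc. Qed.

Lemma mem_cond3_scc a b c u :
  (u \in cond3 sP sO a b c) =
  (u \notin [set a; c]) && [|| connect G u a, connect G u b | connect G u c].
Proof. by rewrite mem_cond3 ?sP_partition // !lep_scc. Qed.

End Pop.



Section Main.
Variable T : finType.
Variable G : rel T.

Local Notation sP := (scc_partition G).
Local Notation sO := (scc_order G).

Definition PA := [set ab : T * T | `[< padj G ab.1 ab.2 >]].
Definition CD := [set t : T * T * T | `[< unshielded_conductor G t.1.1 t.1.2 t.2 >]].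
Definition PF := [set t : T * T * T | `[< perfect_nc G t.1.1 t.1.2 t.2 >]].
Definition IM := [set x : (T * T * T) * (T * T * T) |
  [&& x.2.1.1 == x.1.1.1, x.2.2 == x.1.2,
      `[< imperfect_nc G x.1.1.1 x.1.1.2 x.1.2 >],
      `[< imperfect_nc G x.1.1.1 x.2.1.2 x.1.2 >] & connect G x.1.1.2 x.2.1.2]].

Lemma mem_PA x y : ((x, y) \in PA) = `[< padj G x y >].
Proof. by rewrite inE. Qed.

Lemma mem_E2 P pi a b c : ((a, b, c) \in E2 G P pi) =
  uniq [:: a; b; c] && ((a, b) \in E1 G P pi) && ((c, b) \in E1 G P pi)
  && ((a, c) \notin E1 G P pi) && (lep P pi b a || lep P pi b c).
Proof. by rewrite inE !andbA. Qed.

Lemma mem_E3 P pi a b c : ((a, b, c) \in E3 G P pi) =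
  uniq [:: a; b; c] && ((a, b) \in E1 G P pi) && ((c, b) \in E1 G P pi)
  && ((a, c) \notin E1 G P pi) && `[< ~ dsep G a c (cond3 P pi a b c) >].
Proof. by rewrite inE !andbA. Qed.

Lemma mem_CD a b c : ((a, b, c) \in CD) = `[< unshielded_conductor G a b c >].
Proof. by rewrite inE. Qed.

Lemma mem_PF a b c : ((a, b, c) \in PF) = `[< perfect_nc G a b c >].
Proof. by rewrite inE. Qed.

Lemma ndsep_ex a b Z : ~ dsep G a b Z -> exists s, dconn_path G Z a b s.
Proof. by move=> h; apply: contrapT. Qed.

Lemma PA_sub P pi : PA \subset E1 G P pi.
Proof.
apply/subsetP => -[a b]; rewrite !inE /= => /asboolP p.
by rewrite (padj_neq p); apply/asboolP; apply: padj_dconn.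
Qed.

Lemma E1_scc : E1 G sP sO = PA.
Proof.
apply/eqP; rewrite eqEsubset PA_sub andbT.
apply/subsetP => -[a b]; rewrite !inE /= => /andP[ab /asboolP /ndsep_ex [s ds]].
apply/asboolP.
set W := [set u | connect G u a || connect G u b].
have eW : cond2 sP sO a b = W :\: [set a; b].
  by apply/setP => u; rewrite mem_cond2_scc in_setD !inE.
rewrite eW in ds.
have cl : forall u w, connect G u w -> w \in W -> u \in W.
  move=> u w c; rewrite !inE => /orP[h|h]; apply/orP; [left|right];
  exact: connect_trans c h.
have aW : a \in W by rewrite inE connect0.
have bW : b \in W by rewrite inE connect0 orbT.
case: (sepW cl aW bW ds) => [e|[e|[d [e1 e2 dW]]]]; split => //; auto.
by right; right; exists d; split => //; move: dW; rewrite inE.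
Qed.

Lemma S1_scc : S1 G sP sO.
Proof.
split; first exact: popS.
by move=> P' pi' _; rewrite E1_scc; apply: subset_leq_card; apply: PA_sub.
Qed.

Lemma S1_E1 P pi : S1 G P pi -> E1 G P pi = PA.
Proof.
case=> _ H; apply/eqP; rewrite eq_sym eqEcard PA_sub /=.
by have := H _ _ (popS G); rewrite E1_scc.
Qed.

Lemma unsh_E1 P pi a b c : E1 G P pi = PA ->
  uniq [:: a; b; c] && ((a, b) \in E1 G P pi) && ((c, b) \in E1 G P pi)
    && ((a, c) \notin E1 G P pi) = `[< unshielded G a b c >].
Proof.
move=> ->; rewrite !mem_PA; apply/idP/asboolP.
  by case/andP => /andP[/andP[u /asboolP p1] /asboolP p2] /asboolP p3; split.
by case=> u p3 p1 p2; rewrite u (asboolT p1) (asboolT p2) (asboolF p3).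
Qed.

Lemma notE1_dsep P pi a c : a != c -> (a, c) \notin E1 G P pi ->
  dsep G a c (cond2 P pi a c).
Proof. by rewrite inE /= => -> /= /asboolP h s; apply: h => hh; apply: hh s. Qed.

Lemma core P pi x b z : partition P [set: T] -> E1 G P pi = PA ->
  x != z -> x != b -> ~ padj G x z -> padj G x b -> padj G b z -> connect G b x ->
  b \notin cond2 P pi x z -> False.
Proof.
move=> pP E xz xb npxz pxb pbz bx nb.
have ds : dsep G x z (cond2 P pi x z).
  by apply: notE1_dsep => //; rewrite E inE /=; apply/asboolP.
case A: (anz G (cond2 P pi x z) b).
  by apply: (junction_dconn xz pxb pbz A nb).
by apply: (conductor_dconn xz xb bx (negbT A) pbz).
Qed.

Lemma uniq3 (a b c : T) : uniq [:: a; b; c] -> [/\ a != b, a != c & b != c].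
Proof. by rewrite /= !inE negb_or => /andP[/andP[-> ->] /andP[-> _]]. Qed.

Lemma CD_sub P pi : is_pop P pi -> E1 G P pi = PA -> CD \subset E2 G P pi.
Proof.
move=> [pP _ _ _ _] E.
apply/subsetP => -[[a b] c]; rewrite mem_CD => /asboolP [un cb].
rewrite mem_E2 (unsh_E1 _ _ _ E) (asboolT un) /=.
case L: (lep P pi b a || lep P pi b c) => //; move/negbT/norP: L => [nba nbc].
case: un => u npac pab pcb; have [ab ac bc] := uniq3 u.
exfalso; case/orP: cb => cb.
- apply: (core pP E ac ab npac pab (padj_sym pcb) cb).
  by rewrite mem_cond2 // (negbTE nba) (negbTE nbc) andbF.
- apply: (core (x := c) (z := a) pP E _ _ _ pcb (padj_sym pab) cb).
  + by rewrite eq_sym.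
  + by rewrite eq_sym.
  + by move=> h; apply: npac; apply: padj_sym.
  + by rewrite mem_cond2 // (negbTE nba) (negbTE nbc) andbF.
Qed.

Lemma E2_scc_sub : E2 G sP sO \subset CD.
Proof.
apply/subsetP => -[[a b] c]; rewrite mem_E2 (unsh_E1 _ _ _ E1_scc).
rewrite !lep_scc => /andP[/asboolP un cb].
by rewrite mem_CD; apply/asboolP; split.
Qed.

Lemma S2_scc : S2 G sP sO.
Proof.
split; first exact: S1_scc.
move=> P' pi' h1; apply: subset_leq_card; apply: subset_trans E2_scc_sub _.
by apply: CD_sub; [case: h1 | apply: S1_E1].
Qed.

Lemma S2_E2 P pi : S2 G P pi -> E2 G P pi = CD.
Proof.
case=> h1 H; apply/eqP; rewrite eq_sym eqEcard CD_sub /=; last 2 first.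
- by case: h1.
- exact: S1_E1.
have := H _ _ S1_scc => le; apply: leq_trans le _.
by apply: subset_leq_card; apply: E2_scc_sub.
Qed.

Lemma lep_refl (P : {set {set T}}) (pi : {set {set T} * {set T}}) (u : T) : is_pop P pi -> lep P pi u u.
Proof.
case=> pP _ refl _ _; apply: refl; apply: pblock_mem.
by case/and3P: pP => /eqP -> _ _; rewrite inE.
Qed.

Lemma PF_sub P pi : is_pop P pi -> E1 G P pi = PA -> PF \subset E3 G P pi.
Proof.
move=> pop E; have [pP _ _ _ _] := pop.
apply/subsetP => -[[a b] c]; rewrite mem_PF => /asboolP [[un nc] [d [ad cd db]]].
rewrite mem_E3 (unsh_E1 _ _ _ E) (asboolT un) /=; apply/asboolP.
case: un => uq _ _ _; have [ab ac bc] := uniq3 uq.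
apply: (walk_dconn (s := [:: (true, d); (false, c)])) => //.
rewrite /= /junc /=; split => //; split => //; apply/anzP; exists b => //.
rewrite mem_cond3 // !inE negb_or eq_sym ab bc /= lep_refl //.
by rewrite orbT.
Qed.

Lemma E3_scc_sub : E3 G sP sO \subset PF.
Proof.
apply/subsetP => -[[a b] c]; rewrite mem_E3 (unsh_E1 _ _ _ E1_scc).
move=> /andP[/asboolP un /asboolP /ndsep_ex [s ds]].
case: (un) => uq npac pab pcb; have [ab ac bc] := uniq3 uq.
set W := [set v | [|| connect G v a, connect G v b | connect G v c]].
have eW : cond3 sP sO a b c = W :\: [set a; c].
  by apply/setP => v; rewrite mem_cond3_scc in_setD !inE.
rewrite eW in ds.
have cl : forall v w, connect G v w -> w \in W -> v \in W.
  move=> v w cvw; rewrite !inE => /or3P[h|h|h]; apply/or3P;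
  [apply: Or31|apply: Or32|apply: Or33]; exact: connect_trans cvw h.
have aW : a \in W by rewrite inE connect0.
have cW : c \in W by rewrite inE connect0 !orbT.
have npac' : forall d, G a d -> G c d -> connect G d a || connect G d c -> False.
  by move=> d e1 e2 h; apply: npac; split => //; right; right; exists d.
case: (sepW cl aW cW ds) => [e|[e|[d [e1 e2 dW]]]].
- by exfalso; apply: npac; split => //; left.
- by exfalso; apply: npac; split => //; right; left.
move: dW; rewrite inE => /or3P[da|db|dc].
- by exfalso; apply: (npac' d) => //; rewrite da.
- rewrite mem_PF; apply/asboolP; split; last by exists d.
  split => //; apply/negP => /orP[ba|bc'].
    by apply: (npac' d) => //; rewrite (connect_trans db ba).
  by apply: (npac' d) => //; rewrite (connect_trans db bc') orbT.
- by exfalso; apply: (npac' d) => //; rewrite dc orbT.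
Qed.

Lemma S3_scc : S3 G sP sO.
Proof.
split; first exact: S2_scc.
move=> P' pi' h2; apply: subset_leq_card; apply: subset_trans E3_scc_sub _.
apply: PF_sub; first by case: h2 => -[].
by apply: S1_E1; case: h2.
Qed.

Lemma S3_E3 P pi : S3 G P pi -> E3 G P pi = PF.
Proof.
case=> h2 H; apply/eqP; rewrite eq_sym eqEcard PF_sub /=; last 2 first.
- by case: h2 => -[].
- by apply: S1_E1; case: h2.
have := H _ _ S2_scc => le; apply: leq_trans le _.
by apply: subset_leq_card; apply: E3_scc_sub.
Qed.

Lemma mem_E4 P pi a b1 c a' b2 c' :
  (((a, b1, c), (a', b2, c')) \in E4 G P pi) =
  [&& a' == a, c' == c, uniq [:: a; b1; c], uniq [:: a; b2; c],
      (a, b1) \in E1 G P pi, (c, b1) \in E1 G P pi, (a, b2) \in E1 G P pi,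
      (c, b2) \in E1 G P pi, (a, c) \notin E1 G P pi,
      (a, b1, c) \notin E2 G P pi, (a, b2, c) \notin E2 G P pi,
      (a, b1, c) \notin E3 G P pi, (a, b2, c) \notin E3 G P pi
    & lep P pi b1 b2].
Proof. by rewrite inE. Qed.

Lemma mem_IM a b1 c a' b2 c' :
  (((a, b1, c), (a', b2, c')) \in IM) =
  [&& a' == a, c' == c, `[< imperfect_nc G a b1 c >],
      `[< imperfect_nc G a b2 c >] & connect G b1 b2].
Proof. by rewrite inE. Qed.

Lemma IM_sub P pi : S3 G P pi -> IM \subset E4 G P pi.
Proof.
move=> h3; have [h2 _] := h3; have [h1 _] := h2; have [pop _] := h1.
have [pP _ _ _ _] := pop.
have E1e := S1_E1 h1; have E2e := S2_E2 h2; have E3e := S3_E3 h3.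
apply/subsetP => -[[[a b1] c] [[a' b2] c']].
rewrite mem_IM => /and5P[/eqP -> /eqP -> /asboolP I1 /asboolP I2 cb].
case: (I1) => [[un1 nc1] np1]; case: (I2) => [[un2 nc2] np2].
case: (un1) => u1 npac pab1 pcb1; case: (un2) => u2 _ pab2 pcb2.
have [ab1 ac b1c] := uniq3 u1; have [ab2 _ b2c] := uniq3 u2.
have nco1 : ~ unshielded_conductor G a b1 c by case=> _ h; move: nc1; rewrite h.
have nco2 : ~ unshielded_conductor G a b2 c by case=> _ h; move: nc2; rewrite h.
have npf1 : ~ perfect_nc G a b1 c by case=> _ h; apply: np1.
have npf2 : ~ perfect_nc G a b2 c by case=> _ h; apply: np2.
have n2 : (a, b1, c) \notin E2 G P pi by rewrite E2e mem_CD (asboolF nco1).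
have n3 : (a, b2, c) \notin E3 G P pi by rewrite E3e mem_PF (asboolF npf2).
rewrite mem_E4 !eqxx E1e E2e E3e !mem_PA !mem_CD !mem_PF u1 u2.
rewrite (asboolT pab1) (asboolT pcb1) (asboolT pab2) (asboolT pcb2) (asboolF npac).
rewrite (asboolF nco1) (asboolF nco2) (asboolF npf1) (asboolF npf2) /=.
case L: (lep P pi b1 b2) => //; exfalso.
move: n2; rewrite mem_E2 (unsh_E1 _ _ _ E1e) (asboolT un1) /= => /norP[nb1a nb1c].
move: n3; rewrite mem_E3 (unsh_E1 _ _ _ E1e) (asboolT un2) /= => /asboolPn nd.
apply: nd; apply: (junction_dconn ac pab1 (padj_sym pcb1)).
- apply/anzP; exists b2 => //.
  rewrite mem_cond3 // !inE negb_or eq_sym ab2 b2c /= lep_refl //.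
  by rewrite orbT.
- by rewrite mem_cond3 // (negbTE nb1a) L (negbTE nb1c) andbF.
Qed.

Lemma E4_scc_sub : E4 G sP sO \subset IM.
Proof.
apply/subsetP => -[[[a b1] c] [[a' b2] c']].
rewrite mem_E4 => /and5P[/eqP -> /eqP -> u1 u2 /and5P[e1 e2 e3 e4 /and5P[nac n21 n22 n31 /andP[n32 l12]]]].
have un1 : unshielded G a b1 c.
  by apply/asboolP; rewrite -(unsh_E1 _ _ _ E1_scc) u1 e1 e2 nac.
have un2 : unshielded G a b2 c.
  by apply/asboolP; rewrite -(unsh_E1 _ _ _ E1_scc) u2 e3 e4 nac.
have imp b : unshielded G a b c -> (a, b, c) \notin E2 G sP sO ->
    (a, b, c) \notin E3 G sP sO -> imperfect_nc G a b c.
  move=> un n2 n3.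
  move: n2; rewrite mem_E2 (unsh_E1 _ _ _ E1_scc) (asboolT un) /= !lep_scc => nc.
  split; first by split.
  move=> hd; apply: (negP n3); apply: (subsetP (PF_sub (popS G) E1_scc)).
  by rewrite mem_PF; apply/asboolP; split.
rewrite lep_scc in l12.
by rewrite mem_IM !eqxx (asboolT (imp _ un1 n21 n31)) (asboolT (imp _ un2 n22 n32)) l12.
Qed.

Lemma S4_scc : S4 G sP sO.
Proof.
split; first exact: S3_scc.
move=> P' pi' h3; apply: subset_leq_card; exact: subset_trans E4_scc_sub (IM_sub h3).
Qed.

Lemma S4_E4 P pi : S4 G P pi -> E4 G P pi = IM.
Proof.
case=> h3 H; apply/eqP; rewrite eq_sym eqEcard IM_sub //=.
apply: leq_trans (H _ _ S3_scc) _.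
exact: subset_leq_card E4_scc_sub.
Qed.

End Main.

Theorem proposition3p11 (n : nat) (Gs : rel 'I_n) :
  0 < n -> irreflexive Gs ->
  S4 Gs (scc_partition Gs) (scc_order Gs) /\
  (forall (P : {set {set 'I_n}}) (pi : {set {set 'I_n} * {set 'I_n}}),
     S4 Gs P pi ->
     forall a b1 c b2 : 'I_n,
       ((a, b1, c), (a, b2, c)) \in E4 Gs P pi <->
       [/\ imperfect_nc Gs a b1 c, imperfect_nc Gs a b2 c & connect Gs b1 b2]).
Proof.
move=> _ _; split; first exact: S4_scc.
move=> P pi h a b1 c b2; rewrite (S4_E4 h) mem_IM !eqxx /=.
split.
  by case/and3P => /asboolP ? /asboolP ? ?.
by case=> i1 i2 cb; rewrite (asboolT i1) (asboolT i2) cb.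
Qed.
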